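(* Let $H$ be an infinite-dimensional complex Hilbert space, let $\mathcal{G}_{\infty}(H)$ be the set of all closed subspaces of $H$ whose dimension and codimension are both infinite, and let $f:\mathcal{G}_{\infty}(H)\to\mathcal{G}_{\infty}(H)$ send every pair of subspaces to an equivalent pair of subspaces. Then $f$ is inclusion preserving in both directions: for $X,Y\in\mathcal{G}_{\infty}(H)$, $X\subset Y$ if and only if $f(X)\subset f(Y)$.
   Context: Two pairs of closed subspaces are equivalent if some linear (norm-preserving, not necessarily surjective) isometry of $H$ transfers one pair (as an unordered pair) to the other; $f$ sends every pair to an equivalent pair if for all $X,Y$ there is a linear isometry $M$ with $\{f(X),f(Y)\}=\{M(X),M(Y)\}$. *)

(* Defs.v *)
From HB Require Import structures.
From mathcomp Require Import all_boot all_order all_algebra.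
From mathcomp Require Import complex.
From mathcomp Require Import boolp classical_sets reals.
Set Implicit Arguments. Unset Strict Implicit. Unset Printing Implicit Defensive.
Import Order.TTheory GRing.Theory Num.Theory.
Local Open Scope ring_scope.
Local Open Scope classical_set_scope.

Section Hilbert.
Variables (R : realType) (V : lmodType R[i]) (ip : V -> V -> R[i]).

Definition inner_product : Prop :=
  [/\ (forall (a : R[i]) (u v w : V), ip (a *: u + v) w = a * ip u w + ip v w),
      (forall u v : V, ip u v = (ip v u)^*),
      (forall v : V, 0 <= ip v v) &
      (forall v : V, ip v v = 0 -> v = 0)].

Definition hnorm (v : V) : R := Num.sqrt (complex.Re (ip v v)).

Definition hcauchy (u : nat -> V) : Prop :=
  forall e : R, 0 < e -> exists N : nat,
    forall m n, (N <= m)%N -> (N <= n)%N -> hnorm (u m - u n) < e.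

Definition hconverges (u : nat -> V) (l : V) : Prop :=
  forall e : R, 0 < e -> exists N : nat, forall n, (N <= n)%N -> hnorm (u n - l) < e.

Definition hcomplete : Prop :=
  forall u : nat -> V, hcauchy u -> exists l, hconverges u l.

Definition is_hilbert : Prop := inner_product /\ hcomplete.

(* linear independence of a finite family modulo a subset S
   (S = [set 0] gives plain linear independence) *)
Definition lin_indep_mod (S : set V) (n : nat) (v : 'I_n -> V) : Prop :=
  forall c : 'I_n -> R[i], S (\sum_(i < n) c i *: v i) -> forall i, c i = 0.

Definition inf_dim (S : set V) : Prop :=
  forall n : nat, exists v : 'I_n -> V, (forall i, S (v i)) /\ lin_indep_mod [set 0] v.

(* infinite codimension of the linear subspace S: H/S is infinite-dimensional *)
Definition inf_codim (S : set V) : Prop :=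
  forall n : nat, exists v : 'I_n -> V, lin_indep_mod S v.

Definition lin_subspace (S : set V) : Prop :=
  [/\ S 0, (forall u v, S u -> S v -> S (u + v)) &
      (forall (a : R[i]) v, S v -> S (a *: v))].

Definition hclosed (S : set V) : Prop :=
  forall (u : nat -> V) (l : V), (forall n, S (u n)) -> hconverges u l -> S l.

Definition closed_subspace (S : set V) : Prop := lin_subspace S /\ hclosed S.

Definition Ginf (S : set V) : Prop :=
  [/\ closed_subspace S, inf_dim S & inf_codim S].

Definition lin_isometry (M : V -> V) : Prop :=
  (forall (a : R[i]) (u v : V), M (a *: u + v) = a *: M u + M v) /\
  (forall v, hnorm (M v) = hnorm v).

(* {f X, f Y} = {M X, M Y} as unordered pairs *)
Definition pair_equiv (X Y X' Y' : set V) : Prop :=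
  exists M : V -> V, lin_isometry M /\
    ((X' = M @` X /\ Y' = M @` Y) \/ (X' = M @` Y /\ Y' = M @` X)).

End Hilbert.

(* Main.v *)
Require Import Defs.
From HB Require Import structures.
From mathcomp Require Import all_boot all_order all_algebra.
From mathcomp Require Import complex.
From mathcomp Require Import boolp classical_sets reals.
From mathcomp Require Import lra.
Set Implicit Arguments. Unset Strict Implicit. Unset Printing Implicit Defensive.
Import Order.TTheory GRing.Theory Num.Theory.
Local Open Scope ring_scope.
Local Open Scope classical_set_scope.

Section Basics.
Variables (R : realType) (V : lmodType R[i]) (ip : V -> V -> R[i]).
Hypothesis hip : inner_product ip.

Lemma ipDl u v w : ip (u + v) w = ip u w + ip v w.
Proof. by have [h _ _ _] := hip; have := h 1 u v w; rewrite scale1r mul1r. Qed.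

Lemma ip0l w : ip 0 w = 0.
Proof.
have := ipDl 0 0 w; rewrite addr0 => /eqP.
by rewrite -subr_eq0 opprD addrA subrr sub0r oppr_eq0 => /eqP.
Qed.

Lemma ipZl a u w : ip (a *: u) w = a * ip u w.
Proof. by have [h _ _ _] := hip; have := h a u 0 w; rewrite addr0 ip0l addr0. Qed.

Lemma ipNl u w : ip (- u) w = - ip u w.
Proof. by rewrite -scaleN1r ipZl mulN1r. Qed.

Lemma ipBl u v w : ip (u - v) w = ip u w - ip v w.
Proof. by rewrite ipDl ipNl. Qed.

Lemma ipC u v : ip u v = (ip v u)^*.
Proof. by have [_ h _ _] := hip. Qed.

Lemma ip0r w : ip w 0 = 0.
Proof. by rewrite ipC ip0l conjC0. Qed.

Lemma ip_ge0 v : 0 <= ip v v.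
Proof. by have [_ _ h _] := hip. Qed.

Lemma ip_eq0 v : ip v v = 0 -> v = 0.
Proof. by have [_ _ _ h] := hip; apply: h. Qed.

Lemma ip_sum n (F : 'I_n -> V) w :
  ip (\sum_(i < n) F i) w = \sum_(i < n) ip (F i) w.
Proof.
elim/big_rec2: _ => [|i x y _ <-]; first by rewrite ip0l.
by rewrite ipDl.
Qed.

Lemma ip_real v : ((complex.Re (ip v v))%:C)%C = ip v v.
Proof. by apply: RRe_real; apply: ger0_real; apply: ip_ge0. Qed.

Lemma Re_ip_ge0 v : 0 <= complex.Re (ip v v).
Proof. by rewrite -(@lecR R) ip_real ip_ge0. Qed.

Lemma cauchy_schwarz w a : ip w a * ip a w <= ip w w * ip a a.
Proof.
have [a0|anz] := eqVneq (ip a a) 0.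
  by rewrite (ip_eq0 a0) !ip0r !ip0l !mulr0.
have pa : 0 < ip a a by rewrite lt_def anz ip_ge0.
pose t := ip w a / ip a a.
pose z := w - t *: a.
have za : ip z a = 0.
  by rewrite /z ipBl ipZl /t divfK // subrr.
have az : ip a z = 0 by rewrite ipC za conjC0.
have zz : ip z z = ip w w - (ip a w / ip a a) * ip w a.
  rewrite {1}/z ipBl ipZl az mulr0 subr0.
  rewrite ipC /z ipBl ipZl rmorphB /= rmorphM /= -!ipC.
  rewrite /t fmorph_div /= -ipC (geC0_conj (ip_ge0 a)).
  by [].
have := ip_ge0 z; rewrite zz subr_ge0 mulrAC ler_pdivrMr //.
by rewrite mulrC.
Qed.


Lemma hnorm_lt v e : 0 < e -> hnorm ip v < e -> complex.Re (ip v v) < e ^+ 2.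
Proof.
move=> e0; rewrite /hnorm => h.
have s0 := sqrtr_ge0 (complex.Re (ip v v)).
rewrite -(sqr_sqrtr (Re_ip_ge0 v)).
by rewrite ltr_pXn2r // ?nnegrE // ltW.
Qed.

Lemma ip_lim u l a : (forall n, ip (u n) a = 0) -> hconverges ip u l -> ip l a = 0.
Proof.
move=> hu hc.
pose p := ip l a * ip a l.
have pE : p = ip l a * (ip l a)^* by rewrite /p (ipC a l).
have p0 : 0 <= p by rewrite pE mul_conjC_ge0.
suff : p = 0 by move/eqP; rewrite pE mul_conjC_eq0 => /eqP.
have preal : ((complex.Re p)%:C)%C = p by apply: RRe_real; apply: ger0_real.
have creal := ip_real a.
set P := complex.Re p in preal; set c := complex.Re (ip a a) in creal.
have P0 : 0 <= P by rewrite -(@lecR R) preal.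
have c0 : 0 <= c by apply: Re_ip_ge0.
have [P0eq|Pnz] := eqVneq P 0; first by rewrite -preal P0eq.
have Ppos : 0 < P by rewrite lt_def Pnz P0.
pose e := Num.sqrt (P / (c + 1)).
have epos : 0 < e by rewrite sqrtr_gt0 divr_gt0 // ltr_wpDl.
have [N hN] := hc e epos.
have := hnorm_lt epos (hN N (leqnn N)).
set d := u N - l.
rewrite sqr_sqrtr ?divr_ge0 ?addr_ge0 // => hd.
have dlt : complex.Re (ip d d) * (c + 1) < P by rewrite -ltr_pdivlMr // ltr_wpDl.
have hcs := cauchy_schwarz d a.
have e1 : ip d a = - ip l a by rewrite /d ipBl hu sub0r.
have e2 : ip a d = - ip a l by rewrite ipC e1 rmorphN /= -ipC.
rewrite e1 e2 mulrNN -/p -preal -(ip_real d) -creal -rmorphM /= lecR in hcs.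
have dd0 := Re_ip_ge0 d.
exfalso; move: dlt hcs dd0 c0 Ppos; set D := complex.Re (ip d d); clear; move=> *; nra.
Qed.

Lemma iso_inj M : lin_isometry ip M -> injective M.
Proof.
case=> hlin hn u v huv.
have M0 : M 0 = 0.
  have := hlin 1 0 0; rewrite !scale1r addr0 => /eqP.
  by rewrite -subr_eq0 opprD addrA subrr sub0r oppr_eq0 => /eqP.
have MB : M (u - v) = 0.
  have := hlin (-1) v u; rewrite !scaleN1r addrC => ->.
  by rewrite huv addNr.
have := hn (u - v); rewrite MB /hnorm ip0l => /esym/eqP.
rewrite (_ : complex.Re 0 = 0) // sqrtr0 sqrtr_eq0 => h.
have h0 : complex.Re (ip (u - v) (u - v)) = 0.
  by apply/eqP; rewrite eq_le h Re_ip_ge0.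
apply/eqP; rewrite -subr_eq0; apply/eqP; apply: ip_eq0.
by rewrite -ip_real h0.
Qed.


Lemma lin_sum (K : set V) n (c : 'I_n -> R[i]) (k : 'I_n -> V) :
  lin_subspace K -> (forall j, K (k j)) -> K (\sum_(j < n) c j *: k j).
Proof.
case=> K0 KD KZ hk.
by elim/big_rec: _ => [|j x _ Kx] //; apply: KD => //; apply: KZ.
Qed.

Lemma step (K : set V) : lin_subspace K -> inf_dim K ->
  forall s : seq V, exists v, [/\ K v, v != 0 & forall x, x \in s -> ip v x = 0].
Proof.
move=> Ksub Kinf s.
pose m := size s.
have [k [Kk kind]] := Kinf m.+1.
pose A : 'M[R[i]]_(m.+1, m) := \matrix_(j, i) ip (k j) (nth 0 s i).
have rk : (0 < \rank (kermx A))%N.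
  by rewrite mxrank_ker subn_gt0 ltnS rank_leq_col.
have Knz : kermx A != 0 by rewrite -mxrank_eq0 -lt0n.
have [i0 ci0] : exists i0, row i0 (kermx A) != 0.
  apply/existsP; apply: contraR Knz; rewrite negb_exists => /forallP h.
  apply/eqP/row_matrixP => i; rewrite row0; apply/eqP.
  by have := h i; rewrite negbK.
set c := row i0 (kermx A) in ci0.
have cA : c *m A = 0 by apply/sub_kermxP; apply: row_sub.
exists (\sum_(j < m.+1) c 0 j *: k j); split.
- exact: lin_sum.
- apply/eqP => h0; move/eqP: ci0; apply.
  apply/rowP => j; rewrite [RHS]mxE.
  exact: (kind (fun j => c 0 j) h0 j).
- move=> x xs.
  have ix : (index x s < m)%N by rewrite index_mem.
  have -> : x = nth 0 s (Ordinal ix) by rewrite /= nth_index.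
  rewrite ip_sum.
  have := congr1 (fun M : 'M[R[i]]_(1, m) => M 0 (Ordinal ix)) cA; rewrite !mxE => h.
  by rewrite -[RHS]h; apply: eq_bigr => j _; rewrite ipZl [A _ _]mxE.
Qed.

Lemma orth_indep n (v : 'I_n -> V) :
  (forall i j, i != j -> ip (v i) (v j) = 0) -> (forall i, v i != 0) ->
  lin_indep_mod [set 0] v.
Proof.
move=> ho hnz c hc j.
have := congr1 (fun x => ip x (v j)) hc; rewrite /= ip0l ip_sum (bigD1 j) //=.
rewrite big1 ?addr0; last by move=> i hij; rewrite ipZl ho ?mulr0.
rewrite ipZl => /eqP; rewrite mulf_eq0 => /orP [/eqP //|/eqP/ip_eq0 h].
by move: (hnz j); rewrite h eqxx.
Qed.


Fixpoint pre (g : seq V -> V) (y : V) (n : nat) : seq V :=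
  if n is n'.+1 then g (pre g y n') :: pre g y n' else [:: y].

Lemma pre_y g y n : y \in pre g y n.
Proof. by elim: n => [|n IH] /=; rewrite in_cons ?eqxx // IH orbT. Qed.

Lemma pre_e g y k n : (k < n)%N -> g (pre g y k) \in pre g y n.
Proof.
elim: n => [//|n IH]; rewrite ltnS leq_eqVlt => /orP [/eqP ->|/IH h] /=;
  by rewrite in_cons ?eqxx // h orbT.
Qed.

Lemma codim_sub (S T : set V) : S `<=` T -> inf_codim T -> inf_codim S.
Proof.
move=> ST hT n; have [v hv] := hT n; exists v => c hc; apply: hv.
exact: ST.
Qed.

Lemma lim_perp (u : nat -> V) l a :
  (forall n, ip (u n) a = 0) -> hconverges ip u l -> ip l a = 0.
Proof. exact: ip_lim. Qed.

Lemma construct (X Y : set V) : Ginf ip X -> Ginf ip Y -> X `<=` Y -> X <> Y ->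
  exists Z W, [/\ Ginf ip Z, Ginf ip W, (forall v, Z v -> W v -> v = 0),
    Z `<=` Y & W `<=` Y] /\ (~ (Z `<=` X) /\ ~ (X `<=` Z)).
Proof.
move=> [[Xsub Xcl] Xinf Xcod] [[Ysub Ycl] Yinf Ycod] XY XnY.
have [y [Yy Xy]] : exists y, Y y /\ ~ X y.
  apply: contrapT => hn; apply: XnY; apply/seteqP; split => // v Yv.
  by apply: contrapT => Xv; apply: hn; exists v.
have [g hg] := choice (step Xsub Xinf).
pose e n := g (pre g y n).
have eX n : X (e n) by have [] := hg (pre g y n).
have enz n : e n != 0 by have [] := hg (pre g y n).
have eperp n x : x \in pre g y n -> ip (e n) x = 0.
  by move=> hx; have [_ _ ->] := hg (pre g y n).
have ey n : ip (e n) y = 0 by apply: eperp; apply: pre_y.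
have orth n k : n != k -> ip (e n) (e k) = 0.
  case: (ltngtP k n) => // [kn|nk] _; first by apply: eperp; apply: pre_e.
  by rewrite ipC eperp ?conjC0 //; apply: pre_e.
have [Y0 YD YZ] := Ysub.
pose W := [set v | Y v /\ ip v y = 0 /\ forall k, ip v (e k.*2) = 0].
pose Z := [set v | Y v /\ forall w, W w -> ip v w = 0].
have Wsub : lin_subspace W.
  split.
  - by split => //; split; [rewrite ip0l | move=> k; rewrite ip0l].
  - move=> u v [Yu [uy uk]] [Yv [vy vk]]; split; first exact: YD.
    by split; [rewrite ipDl uy vy addr0 | move=> k; rewrite ipDl uk vk addr0].
  - move=> a v [Yv [vy vk]]; split; first exact: YZ.
    by split; [rewrite ipZl vy mulr0 | move=> k; rewrite ipZl vk mulr0].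
have Zsub : lin_subspace Z.
  split.
  - by split => // w _; rewrite ip0l.
  - move=> u v [Yu hu] [Yv hv]; split; first exact: YD.
    by move=> w Ww; rewrite ipDl hu // hv // addr0.
  - move=> a v [Yv hv]; split; first exact: YZ.
    by move=> w Ww; rewrite ipZl hv // mulr0.
have WY : W `<=` Y by move=> v [].
have ZY : Z `<=` Y by move=> v [].
have ZW v : Z v -> W v -> v = 0.
  by move=> [_ h] Wv; apply: ip_eq0; apply: h.
have eW n : W (e n.*2.+1).
  split; first exact: XY.
  split; first exact: ey.
  move=> k; apply: orth.
  by apply/negP => /eqP /(congr1 odd); rewrite /= !odd_double.
have eZ n : Z (e n.*2).
  split; first exact: XY.
  by move=> w [_ [_ hw]]; rewrite ipC hw conjC0.
exists Z, W; split; [split => // | split].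
- split; [split => // | |].
  + move=> u l hu hc; split; first by apply: (Ycl u l) => // n; case: (hu n).
    move=> w Ww; apply: (lim_perp (u := u)) => // n.
    by case: (hu n) => _ ->.
  + move=> n; exists (fun i : 'I_n => e (i : nat).*2); split => //.
    apply: orth_indep => // i j hij; apply: orth.
    by rewrite (inj_eq double_inj).
  + exact: codim_sub Ycod.
- split; [split => // | |].
  + move=> u l hu hc; split; first by apply: (Ycl u l) => // n; case: (hu n).
    split.
      by apply: (lim_perp (u := u)) => // n; case: (hu n) => _ [].
    move=> k; apply: (lim_perp (u := u)) => // n.
    by case: (hu n) => _ [_ ].
  + move=> n; exists (fun i : 'I_n => e (i : nat).*2.+1); split => //.
    apply: orth_indep => // i j hij; apply: orth.
    by rewrite eqSS (inj_eq double_inj).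
  + exact: codim_sub Ycod.
- move=> ZX; apply: Xy; apply: ZX; split => // w [_ [wy _]].
  by rewrite ipC wy conjC0.
- move=> XZ; have := enz 0%N.*2.+1; rewrite (ZW _ (XZ _ (eX _)) (eW 0%N)).
  by rewrite eqxx.
Qed.

End Basics.

Section Pairs.
Variables (R : realType) (V : lmodType R[i]) (ip : V -> V -> R[i]).
Hypothesis hip : inner_product ip.

Lemma img_sub (M : V -> V) (A B : set V) :
  injective M -> M @` A `<=` M @` B -> A `<=` B.
Proof.
move=> Minj h a Aa.
have [b Bb eb] : (M @` B) (M a) by apply: h; exists a.
by rewrite -(Minj _ _ eb).
Qed.

Lemma img_sub2 (M : V -> V) (A B : set V) : A `<=` B -> M @` A `<=` M @` B.
Proof. by move=> h _ [a Aa <-]; exists a => //; apply: h. Qed.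

Lemma pe_sub X Y X' Y' : pair_equiv ip X Y X' Y' -> X' `<=` Y' ->
  X `<=` Y \/ Y `<=` X.
Proof.
move=> [M [hM [[-> ->]|[-> ->]]]] h; have Minj := iso_inj hip hM.
- by left; apply: img_sub h.
- by right; apply: img_sub h.
Qed.

Lemma pe_eq X Y X' Y' : pair_equiv ip X Y X' Y' -> X' `<=` Y' -> Y' `<=` X' ->
  X `<=` Y.
Proof.
move=> [M [hM [[-> ->]|[-> ->]]]] h1 h2; have Minj := iso_inj hip hM.
- exact: img_sub h1.
- exact: img_sub h2.
Qed.

Lemma pe_comp X Y X' Y' : pair_equiv ip X Y X' Y' -> X `<=` Y ->
  X' `<=` Y' \/ Y' `<=` X'.
Proof.
move=> [M [hM [[-> ->]|[-> ->]]]] h.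
- by left; apply: img_sub2.
- by right; apply: img_sub2.
Qed.

Lemma lin_M0 (M : V -> V) : lin_isometry ip M -> M 0 = 0.
Proof.
case=> hlin _; have := hlin 1 0 0; rewrite !scale1r addr0 => /eqP.
by rewrite -subr_eq0 opprD addrA subrr sub0r oppr_eq0 => /eqP.
Qed.

Lemma pe_disj X Y X' Y' : pair_equiv ip X Y X' Y' ->
  (forall v, X v -> Y v -> v = 0) -> forall v, X' v -> Y' v -> v = 0.
Proof.
move=> [M [hM [[-> ->]|[-> ->]]]] h v [a Aa <-] [b Bb eb];
  have Minj := iso_inj hip hM; move: (Minj _ _ eb) => ab; subst b;
  rewrite (h a) ?lin_M0 //.
Qed.

Lemma ginf_nz (S : set V) : Ginf ip S -> exists v, S v /\ v <> 0.
Proof.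
move=> [_ hd _]; have [v [Sv vi]] := hd 1%N.
exists (v ord0); split => // v0.
have := vi (fun _ => 1) ; rewrite big_ord1 scale1r v0 => /(_ erefl ord0).
by move/eqP; rewrite oner_eq0.
Qed.

End Pairs.

Unset Implicit Arguments.
Theorem lemma1 (R : realType) (V : lmodType R[i]) (ip : V -> V -> R[i])
  (hH : is_hilbert ip) (hinf : inf_dim [set: V])
  (f : set V -> set V)
  (hf : forall X, Ginf ip X -> Ginf ip (f X))
  (hpair : forall X Y, Ginf ip X -> Ginf ip Y -> pair_equiv ip X Y (f X) (f Y)) :
  forall X Y, Ginf ip X -> Ginf ip Y -> (X `<=` Y <-> f X `<=` f Y).
Proof.
have hip : inner_product ip by case: hH.
have forced : forall A B W, Ginf ip A -> Ginf ip B -> Ginf ip W ->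
    A `<=` B -> W `<=` B -> (forall v, W v -> A v -> v = 0) -> f A `<=` f B.
  move=> A B W GA GB GW AB WB WA.
  case: (pe_comp (hpair _ _ GA GB) AB) => // BA.
  have dWA := pe_disj hip (hpair _ _ GW GA) WA.
  exfalso; case: (pe_comp (hpair _ _ GW GB) WB) => h.
  - have [v [fWv vnz]] := ginf_nz (hf _ GW).
    by apply: vnz; apply: dWA => //; apply: BA; apply: h.
  - have [v [fBv vnz]] := ginf_nz (hf _ GB).
    by apply: vnz; apply: dWA; [apply: h | apply: BA].
have fwd : forall X Y, Ginf ip X -> Ginf ip Y -> X `<=` Y -> f X `<=` f Y.
  move=> X Y GX GY XY.
  have [->|XnY] := pselect (X = Y); first by [].
  case: (pe_comp (hpair _ _ GX GY) XY) => // fYX.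
  have [Z [W [[GZ GW ZW ZY WY] [nZX nXZ]]]] := construct hip GX GY XY XnY.
  have fZY : f Z `<=` f Y.
    by apply: (forced Z Y W) => // v Wv Zv; apply: ZW.
  have fZX : f Z `<=` f X by move=> v /fZY /fYX.
  by case: (pe_sub hip (hpair _ _ GZ GX) fZX).
move=> X Y GX GY; split; first exact: fwd.
move=> fXY; case: (pe_sub hip (hpair _ _ GX GY) fXY) => // YX.
have fYX := fwd _ _ GY GX YX.
exact: (pe_eq hip (hpair _ _ GX GY) fXY fYX).
Qed.
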